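(* Let $m\ge2$ and let $\mathcal{P}^{OC}_m$ be the set of partial matchings $\pi$ of $[m]$ (set partitions of $[m]$ with all blocks of size at most $2$) having at least one arc, such that every opener of $\pi$ is smaller than every closer of $\pi$, $1$ is an opener and $m$ is a closer (fixed points may occur anywhere strictly between $1$ and $m$). For $\pi\in\mathcal{P}^{OC}_m$ let $c_1<c_2<\dots<c_r$ be the closers of $\pi$, let $\rho_\pi(c_i)=c_{r+1-i}$ and $\rho_\pi(x)=x$ for every other $x\in[m]$, and define $\Phi(\pi)$ to be the partial matching with arcs $\{(a,\rho_\pi(b)):(a,b)\text{ an arc of }\pi\}$ and the same fixed points as $\pi$. Then $\Phi$ is an involution on $\mathcal{P}^{OC}_m$ and for every $t\ge2$, $$\mathrm{ne}_t(\Phi(\pi))=\mathrm{cr}_t(\pi),\qquad \mathrm{cr}_t(\Phi(\pi))=\mathrm{ne}_t(\pi).$$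
   Context: A partial matching of $[m]=\{1,\dots,m\}$ is a set partition of $[m]$ all of whose blocks have size $1$ or $2$. A block $\{i,j\}$ with $i<j$ is written as the arc $(i,j)$; $i$ is called an opener and $j$ a closer. A singleton block $\{i\}$ is called a fixed point. For $t\ge 2$, a $t$-crossing is a set of $t$ arcs $(i_1,j_1),\dots,(i_t,j_t)$ with $i_1<i_2<\dots<i_t<j_1<j_2<\dots<j_t$, and a $t$-nesting is a set of $t$ arcs with $i_1<i_2<\dots<i_t<j_t<j_{t-1}<\dots<j_1$. For a partial matching $\pi$ and $t\ge2$, $\mathrm{cr}_t(\pi)$ and $\mathrm{ne}_t(\pi)$ denote the number of $t$-crossings and of $t$-nestings of $\pi$. *)

(* Defs.v *)
(* Ground set [m] = {1,...,m} is modelled by 'I_m = {0,...,m-1}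
   (element k+1 of [m] <-> ordinal k); order is preserved. *)
From mathcomp Require Import all_boot.
Set Implicit Arguments. Unset Strict Implicit. Unset Printing Implicit Defensive.

Section PM.
Variable m : nat.
Implicit Types (pi : {set {set 'I_m}}) (x y : 'I_m).

Definition is_partial_matching pi : bool :=
  partition pi [set: 'I_m] && [forall B in pi, #|B| <= 2].

Definition is_arc pi x y : bool := (x < y) && ([set x; y] \in pi).
Definition is_opener pi x : bool := [exists y, is_arc pi x y].
Definition is_closer pi y : bool := [exists x, is_arc pi x y].
Definition is_fixed_point pi x : bool := [set x] \in pi.

Definition in_POC pi : bool :=
  [&& is_partial_matching pi,
      [exists x, exists y, is_arc pi x y],
      [forall x, forall y, (is_opener pi x && is_closer pi y) ==> (x < y)],
      [exists x, (val x == 0) && is_opener pi x]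
    & [exists y, (val y == m.-1) && is_closer pi y]].

Definition closers pi : seq 'I_m := [seq y <- enum 'I_m | is_closer pi y].

(* rho_pi(c_i) = c_{r+1-i}, identity elsewhere *)
Definition rho pi x : 'I_m :=
  let c := closers pi in
  if x \in c then nth x c ((size c).-1 - index x c) else x.

Definition Phi pi : {set {set 'I_m}} :=
  [set [set p.1; rho pi p.2] | p in [set p : 'I_m * 'I_m | is_arc pi p.1 p.2]]
  :|: [set [set x] | x in [set x | is_fixed_point pi x]].

(* number of t-crossings: t-tuples of arcs (i_1,j_1),...,(i_t,j_t) with
   i_1 < ... < i_t < j_1 < ... < j_t  (each t-set of arcs with this pattern
   has exactly one such enumeration) *)
Definition cr (t : nat) pi : nat :=
  #|[set f : {ffun 'I_t -> 'I_m * 'I_m} |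
      [forall k, is_arc pi (f k).1 (f k).2] &&
      [forall k, forall l,
         ((f k).1 < (f l).2) &&
         ((k < l) ==> (((f k).1 < (f l).1) && ((f k).2 < (f l).2)))]]|.

Definition ne (t : nat) pi : nat :=
  #|[set f : {ffun 'I_t -> 'I_m * 'I_m} |
      [forall k, is_arc pi (f k).1 (f k).2] &&
      [forall k, forall l,
         ((f k).1 < (f l).2) &&
         ((k < l) ==> (((f k).1 < (f l).1) && ((f l).2 < (f k).2)))]]|.

End PM.

(* Main.v *)
Require Import Defs.
From mathcomp Require Import all_boot zify.
Set Implicit Arguments. Unset Strict Implicit. Unset Printing Implicit Defensive.

Section Rho.
Variable m : nat.
Variable pi : {set {set 'I_m}}.
Local Notation c := (closers pi).
Local Notation r := (rho pi).

Lemma mem_closers y : (y \in c) = is_closer pi y.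
Proof. by rewrite /closers mem_filter mem_enum andbT. Qed.

Lemma uniq_closers : uniq c.
Proof. by rewrite /closers filter_uniq // enum_uniq. Qed.

Let ltO : rel 'I_m := fun a b => a < b.
Lemma ltO_tr : transitive ltO.
Proof. move=> a b d; exact: ltn_trans. Qed.

Lemma sorted_closers : sorted ltO c.
Proof.
rewrite /closers; apply: sorted_filter; first exact: ltO_tr.
have := iota_ltn_sorted 0 m; rewrite -val_enum_ord sorted_map.
by [].
Qed.

Lemma rho_in x : x \in c -> r x = nth x c ((size c).-1 - index x c).
Proof. by rewrite /rho => ->. Qed.

Lemma rho_out x : x \notin c -> r x = x.
Proof. by rewrite /rho => /negbTE ->. Qed.

Lemma rho_mem x : (r x \in c) = (x \in c).
Proof.
case xc: (x \in c); last by rewrite rho_out ?xc.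
rewrite rho_in // mem_nth //.
rewrite -index_mem in xc; move: xc; set a := index _ _; set b := size _; lia.
Qed.

Lemma rhoK x : r (r x) = x.
Proof.
case xc: (x \in c); last by rewrite !rho_out ?xc.
have ix : index x c < size c by rewrite index_mem.
have hj : (size c).-1 - index x c < size c.
  by case: (size c) ix => // n _; rewrite ltnS leq_subr.
rewrite (rho_in (x := r x)) ?rho_mem // rho_in // index_uniq ?uniq_closers //.
rewrite subKn; last by case: (size c) ix.
by rewrite (set_nth_default x) // nth_index.
Qed.

Lemma rho_inj : injective r.
Proof. exact: (can_inj rhoK). Qed.

Lemma index_lt x y : x \in c -> y \in c -> x < y -> index x c < index y c.
Proof.
move=> xc yc xy; case: (ltngtP (index x c) (index y c)) => // h.
  have := @sorted_ltn_index _ _ ltO_tr _ sorted_closers y x yc xc h.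
  by rewrite /ltO ltnNge ltnW.
have : x = y by rewrite -(nth_index x xc) h (nth_index x yc).
by move=> e; rewrite e ltnn in xy.
Qed.

Lemma rho_rev x y : x \in c -> y \in c -> x < y -> r y < r x.
Proof.
move=> xc yc xy; have ixy := index_lt xc yc xy.
have iy : index y c < size c by rewrite index_mem.
move: ixy iy; set a := index x c; set b := index y c; set n := size c => ab bn.
have h1 : n.-1 - b < n by lia.
have h2 : n.-1 - a < n by lia.
rewrite !rho_in // (set_nth_default x y h1).
apply: (sorted_ltn_nth ltO_tr x sorted_closers); rewrite ?inE //; lia.
Qed.

Lemma rho_rev_iff x y : x \in c -> y \in c -> (r y < r x) = (x < y).
Proof.
move=> xc yc; apply/idP/idP; last exact: rho_rev.
move=> h; have := rho_rev (x := r y) (y := r x); rewrite !rho_mem !rhoK.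
by apply.
Qed.
End Rho.

Section Main.
Variable m : nat.
Variable pi : {set {set 'I_m}}.
Hypothesis H : in_POC pi.
Local Notation r := (rho pi).

Lemma Hpart : partition pi [set: 'I_m].
Proof. by case/and5P: H => /andP[]. Qed.

Lemma Hsz B : B \in pi -> #|B| <= 2.
Proof. by case/and5P: H => /andP[_ /forallP h] _ _ _ _ hB; have := h B; rewrite hB. Qed.

Lemma HOC x y : is_opener pi x -> is_closer pi y -> x < y.
Proof.
case/and5P: H => _ _ /forallP h _ _ ox cy.
by have /forallP/(_ y) := h x; rewrite ox cy.
Qed.

Lemma arc_op a b : is_arc pi a b -> is_opener pi a.
Proof. by move=> h; apply/existsP; exists b. Qed.
Lemma arc_cl a b : is_arc pi a b -> is_closer pi b.
Proof. by move=> h; apply/existsP; exists a. Qed.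

Lemma op_ncl x : is_opener pi x -> ~~ is_closer pi x.
Proof. by move=> o; apply/negP => cx; have := HOC o cx; rewrite ltnn. Qed.

Lemma same_block B1 B2 x : B1 \in pi -> B2 \in pi -> x \in B1 -> x \in B2 -> B1 = B2.
Proof.
have tI := partition_trivIset Hpart.
by move=> h1 h2 x1 x2; rewrite -(def_pblock tI h1 x1) (def_pblock tI h2 x2).
Qed.

Lemma fix_ncl x : is_fixed_point pi x -> ~~ is_closer pi x.
Proof.
move=> fx; apply/negP => /existsP[a /andP[ax ha]].
have e := same_block ha fx (setU1r _ (set11 x)) (set11 x).
have : a \in [set x] by rewrite -e setU11.
by rewrite inE => /eqP ea; rewrite ea ltnn in ax.
Qed.

Lemma rho_fix x : ~~ is_closer pi x -> r x = x.
Proof. by move=> h; rewrite rho_out // mem_closers. Qed.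

Lemma block_cases B : B \in pi ->
  (exists x, B = [set x] /\ is_fixed_point pi x) \/
  (exists a b, B = [set a; b] /\ is_arc pi a b).
Proof.
move=> hB; have h2 := Hsz hB; have n0 := partition_neq0 Hpart hB.
have h0 : 0 < #|B| by rewrite card_gt0.
have [e|e] : #|B| = 1 \/ #|B| = 2 by lia.
  have /cards1P[x eB] : #|B| == 1 by rewrite e.
  by left; exists x; split => //; rewrite /is_fixed_point -eB.
have /cards2P[x [y [xy eB]]] : #|B| == 2 by rewrite e.
right; case: (ltngtP x y) => h.
- by exists x, y; split => //; rewrite /is_arc h -eB hB.
- have e2 : [set x; y] = [set y; x] by apply/setP => z; rewrite !inE orbC.
  exists y, x; split; first by rewrite eB e2.
  by rewrite /is_arc h -e2 -eB hB.
- by move/eqP: xy; case; apply: val_inj.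
Qed.

Lemma imset2 (f : 'I_m -> 'I_m) a b : f @: [set a; b] = [set f a; f b].
Proof. by rewrite imsetU1 imset_set1. Qed.

Lemma PhiE : Phi pi = [set r @: (B : {set 'I_m}) | B in pi].
Proof.
apply/setP => B'; apply/idP/imsetP.
- case/setUP => /imsetP[p].
  + rewrite inE => hp ->; exists [set p.1; p.2]; first by case/andP: hp.
    by rewrite imset2 (rho_fix (op_ncl (arc_op hp))).
  + rewrite inE => hp ->; exists [set p] => //.
    by rewrite imset_set1 (rho_fix (fix_ncl hp)).
- move=> [B hB ->]; case: (block_cases hB) => [[x [-> fx]]|[a [b [-> ab]]]].
  + rewrite imset_set1 (rho_fix (fix_ncl fx)); apply/setUP; right.
    by apply/imsetP; exists x; rewrite ?inE.
  + rewrite imset2 (rho_fix (op_ncl (arc_op ab))); apply/setUP; left.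
    by apply/imsetP; exists (a, b); rewrite ?inE.
Qed.

Lemma imsetK (B : {set 'I_m}) : r @: (r @: B) = B.
Proof.
by rewrite -imset_comp (eq_imset _ (@rhoK m pi)) imset_id.
Qed.

Lemma memPhi (B' : {set 'I_m}) : (B' \in Phi pi) = (r @: B' \in pi).
Proof.
rewrite PhiE; apply/imsetP/idP => [[B hB ->]|h]; first by rewrite imsetK.
by exists (r @: B'); rewrite ?imsetK.
Qed.

Lemma cl_rho y : is_closer pi (r y) = is_closer pi y.
Proof. by rewrite -!mem_closers rho_mem. Qed.

Lemma arc_Phi x y : is_arc (Phi pi) x y = is_arc pi x (r y).
Proof.
apply/idP/idP.
- case/andP => xy; rewrite memPhi imset2 => hB.
  have rxy : r x != r y.
    by rewrite (inj_eq (@rho_inj m pi)); apply/eqP => e; rewrite e ltnn in xy.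
  case: (ltngtP (r x) (r y)) => h.
  + have a : is_arc pi (r x) (r y) by rewrite /is_arc h hB.
    have nx : ~~ is_closer pi x by rewrite -cl_rho op_ncl // (arc_op a).
    by move: a; rewrite rho_fix.
  + have a : is_arc pi (r y) (r x) by rewrite /is_arc h setUC hB.
    have ny : ~~ is_closer pi y by rewrite -cl_rho op_ncl // (arc_op a).
    move: a; rewrite (rho_fix ny) => a.
    have cx : is_closer pi x by rewrite -cl_rho (arc_cl a).
    have := HOC (arc_op a) cx; rewrite ltnNge ltnW //.
  + by move/eqP: rxy; case; apply: val_inj.
- move=> a; have ox := arc_op a; have cy : is_closer pi y by rewrite -cl_rho (arc_cl a).
  rewrite /is_arc (HOC ox cy) memPhi imset2 (rho_fix (op_ncl ox)).
  by case/andP: a.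
Qed.

Lemma cl_Phi y : is_closer (Phi pi) y = is_closer pi y.
Proof.
rewrite -cl_rho; apply/existsP/existsP => [[x]|[x a]].
- by rewrite arc_Phi; exists x.
- by exists x; rewrite arc_Phi.
Qed.

Lemma op_Phi x : is_opener (Phi pi) x = is_opener pi x.
Proof.
apply/existsP/existsP => [[y]|[y a]].
- by rewrite arc_Phi; exists (r y).
- by exists (r y); rewrite arc_Phi rhoK.
Qed.

Lemma closers_Phi : closers (Phi pi) = closers pi.
Proof. by rewrite /closers; apply: eq_filter => y; rewrite cl_Phi. Qed.

Lemma rho_Phi : rho (Phi pi) =1 rho pi.
Proof. by move=> x; rewrite /rho closers_Phi. Qed.

Lemma setT_rho : r @: [set: 'I_m] = [set: 'I_m].
Proof. by apply/setP => x; rewrite inE -[x](@rhoK m pi) imset_f ?inE. Qed.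

Lemma POC_Phi : in_POC (Phi pi).
Proof.
case/and5P: H => _ /existsP[a /existsP[b ab]] _ /existsP[x0 /andP[x00 ox0]]
  /existsP[y0 /andP[y0m cy0]].
apply/and5P; split.
- apply/andP; split.
  + by rewrite PhiE -setT_rho imset_partition ?Hpart //; apply: rho_inj.
  + apply/forallP => B; apply/implyP; rewrite PhiE => /imsetP[B0 hB0 ->].
    by rewrite card_imset ?Hsz //; apply: rho_inj.
- by apply/existsP; exists a; apply/existsP; exists (r b); rewrite arc_Phi rhoK.
- apply/forallP => x; apply/forallP => y; rewrite op_Phi cl_Phi.
  by apply/implyP => /andP[]; apply: HOC.
- by apply/existsP; exists x0; rewrite x00 op_Phi.
- by apply/existsP; exists y0; rewrite y0m cl_Phi.
Qed.


End Main.

Lemma PhiK m (pi : {set {set 'I_m}}) : in_POC pi -> Phi (Phi pi) = pi.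
Proof.
move=> H; apply/setP => B.
rewrite (memPhi (POC_Phi H)) (eq_imset _ (rho_Phi H)) (memPhi H) imsetK //.
Qed.

Lemma card_inv (T : finType) (F : T -> T) (S S' : {set T}) :
  cancel F F -> (forall h, (h \in S') = (F h \in S)) -> #|S'| = #|S|.
Proof.
move=> FK hS; have -> : S' = F @: S.
  apply/setP => h; apply/idP/imsetP => [hh|[g hg ->]].
  - by exists (F h); rewrite -?hS ?FK.
  - by rewrite hS FK.
by rewrite card_imset //; apply: can_inj FK.
Qed.

Section CrNe.
Variable m : nat.
Variable pi : {set {set 'I_m}}.
Hypothesis H : in_POC pi.
Local Notation r := (rho pi).
Variable t : nat.

Definition Fm (h : {ffun 'I_t -> 'I_m * 'I_m}) : {ffun 'I_t -> 'I_m * 'I_m} :=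
  [ffun k => ((h k).1, r (h k).2)].

Lemma FmK : cancel Fm Fm.
Proof. by move=> h; apply/ffunP => k; rewrite !ffunE /= rhoK; case: (h k). Qed.

Lemma arcs_Phi (h : {ffun 'I_t -> 'I_m * 'I_m}) :
  [forall k, is_arc (Phi pi) (h k).1 (h k).2] =
  [forall k, is_arc pi (Fm h k).1 (Fm h k).2].
Proof. by apply: eq_forallb => k; rewrite arc_Phi // ffunE. Qed.

Lemma arcs_facts (h : {ffun 'I_t -> 'I_m * 'I_m}) :
  [forall k, is_arc pi (Fm h k).1 (Fm h k).2] ->
  forall k l, [/\ (h k).1 < (h l).2, (h k).1 < r (h l).2,
     (h k).2 \in closers pi & (h l).2 \in closers pi].
Proof.
move=> /forallP A k l; have Ak := A k; have Al := A l; rewrite !ffunE /= in Ak Al.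
have ok := arc_op Ak; have cl := arc_cl Al.
have ck : (h k).2 \in closers pi by rewrite -(rho_mem pi) mem_closers (arc_cl Ak).
have cl' : (h l).2 \in closers pi by rewrite -(rho_mem pi) mem_closers.
have cl2 : is_closer pi (h l).2 by rewrite -mem_closers.
have h1 := HOC H ok cl2; have h2 := HOC H ok cl; by split.
Qed.

Lemma ne_Phi : ne t (Phi pi) = cr t pi.
Proof.
apply: (card_inv FmK) => h; rewrite !inE arcs_Phi.
case A: [forall k, _] => //=; have F := arcs_facts A.
apply: eq_forallb => k; apply: eq_forallb => l; rewrite !ffunE /=.
case: (F k l) => -> -> ck cl; rewrite (rho_rev_iff cl ck) //.
Qed.

Lemma cr_Phi : cr t (Phi pi) = ne t pi.
Proof.
apply: (card_inv FmK) => h; rewrite !inE arcs_Phi.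
case A: [forall k, _] => //=; have F := arcs_facts A.
apply: eq_forallb => k; apply: eq_forallb => l; rewrite !ffunE /=.
case: (F k l) => -> -> ck cl; rewrite (rho_rev_iff ck cl) //.
Qed.
End CrNe.

Unset Implicit Arguments.
Theorem mainTheorem3 (m : nat) (hm : 2 <= m) (pi : {set {set 'I_m}}) :
  in_POC pi ->
  [/\ in_POC (Phi pi), Phi (Phi pi) = pi &
      forall t : nat, 2 <= t -> ne t (Phi pi) = cr t pi /\ cr t (Phi pi) = ne t pi].
Proof.
move=> H; split; [exact: POC_Phi | exact: PhiK |].
by move=> t _; split; [exact: ne_Phi | exact: cr_Phi].
Qed.
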